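(* Let $\{s_1,\dots,s_n\}\subset\mathbb{S}^{d-1}$ be $\eta$-dense with $\eta\le1/8$, and let $A\in\mathbb{R}^{n\times d}$ have rows $a_1,\dots,a_n$ with $\|a_i-s_i\|\le\eta$ for every $i\in[n]$. For every $b\in[1-\eta,1+\eta]^n$, \[ (1-2\eta)\mathbb{B}_2^d\subseteq\{x\in\mathbb{R}^d:Ax\le b\}\subseteq(1+4\eta)\mathbb{B}_2^d. \]
   Context: A set $S\subset\mathbb{S}^{d-1}$ is $\eta$-dense if for every $x\in\mathbb{S}^{d-1}$ there is $s\in S$ with $\|x-s\|\le\eta$. $\mathbb{B}_2^d$ is the closed Euclidean unit ball. *)

(* Defs.v *)
From HB Require Import structures.
From mathcomp Require Import all_boot all_order all_algebra.
From mathcomp Require Import reals.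
Set Implicit Arguments. Unset Strict Implicit. Unset Printing Implicit Defensive.
Import Order.TTheory GRing.Theory Num.Theory.
Local Open Scope ring_scope.

Definition enorm (R : realType) (d : nat) (x : 'rV[R]_d) : R :=
  Num.sqrt (\sum_(j < d) x 0 j ^+ 2).

Definition on_sphere (R : realType) (d : nat) (x : 'rV[R]_d) : Prop :=
  enorm x = 1.

Definition eta_dense (R : realType) (d n : nat) (s : 'I_n -> 'rV[R]_d) (eta : R) : Prop :=
  forall x : 'rV[R]_d, on_sphere x -> exists i : 'I_n, enorm (x - s i) <= eta.

Definition in_scaled_ball (R : realType) (d : nat) (r : R) (x : 'rV[R]_d) : Prop :=
  exists y : 'rV[R]_d, enorm y <= 1 /\ x = r *: y.

Definition in_polyhedron (R : realType) (n d : nat) (A : 'M[R]_(n, d)) (b : 'cV[R]_n)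
  (x : 'rV[R]_d) : Prop :=
  forall i : 'I_n, (A *m x^T) i 0 <= b i 0.

(* Main.v *)
Require Import Defs.
From HB Require Import structures.
From mathcomp Require Import all_boot all_order all_algebra.
From mathcomp Require Import reals.
From mathcomp Require Import ring lra.
Import Order.TTheory GRing.Theory Num.Theory.
Local Open Scope ring_scope.

Section H.
Context {R : realType} {d : nat}.
Implicit Types u v x : 'rV[R]_d.

Definition dot u v := (u *m v^T) 0 0.

Lemma dotE u v : dot u v = \sum_j u 0 j * v 0 j.
Proof. by rewrite /dot !mxE; apply: eq_bigr => j _; rewrite mxE. Qed.

Lemma dotDl u v x : dot (u + v) x = dot u x + dot v x.
Proof. by rewrite /dot mulmxDl mxE. Qed.
Lemma dotBl u v x : dot (u - v) x = dot u x - dot v x.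
Proof. by rewrite /dot mulmxBl !mxE. Qed.
Lemma dotZl c u x : dot (c *: u) x = c * dot u x.
Proof. by rewrite /dot -scalemxAl mxE. Qed.
Lemma dotZr c u x : dot u (c *: x) = c * dot u x.
Proof. by rewrite !dotE mulr_sumr; apply: eq_bigr => j _; rewrite mxE mulrCA. Qed.

Lemma dotC u v : dot u v = dot v u.
Proof. by rewrite !dotE; apply: eq_bigr => j _; rewrite mulrC. Qed.
Lemma dotBr u v x : dot x (u - v) = dot x u - dot x v.
Proof. by rewrite !(dotC x) dotBl. Qed.

Lemma sumsq_ge0 x : 0 <= \sum_(j < d) x 0 j ^+ 2.
Proof. by apply: sumr_ge0 => j _; apply: sqr_ge0. Qed.

Lemma enorm_ge0 x : 0 <= enorm x.
Proof. exact: sqrtr_ge0. Qed.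

Lemma enorm_sq x : enorm x ^+ 2 = dot x x.
Proof.
rewrite /enorm sqr_sqrtr ?sumsq_ge0 // dotE.
by apply: eq_bigr => j _; rewrite expr2.
Qed.

Lemma enorm0 x : enorm x = 0 -> x = 0.
Proof.
move=> h; have h2 : \sum_(j < d) x 0 j ^+ 2 = 0.
  by rewrite -(sqr_sqrtr (sumsq_ge0 x)) -/(enorm x) h expr2 mulr0.
have := (psumr_eq0P (fun j _ => sqr_ge0 (x 0 j)) h2) => H.
apply/matrixP => i j; rewrite ord1 mxE; apply/eqP.
by rewrite -sqrf_eq0; apply/eqP; apply: H.
Qed.

Lemma enormZ c x : enorm (c *: x) = `|c| * enorm x.
Proof.
rewrite /enorm.
rewrite (eq_bigr (fun j => c ^+ 2 * x 0 j ^+ 2)); last first.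
  by move=> j _; rewrite mxE exprMn.
by rewrite -mulr_sumr sqrtrM ?sqr_ge0 // sqrtr_sqr.
Qed.

Lemma enormN x : enorm (- x) = enorm x.
Proof. by rewrite -scaleN1r enormZ normrN normr1 mul1r. Qed.

Lemma CS u v : dot u v <= enorm u * enorm v.
Proof.
have [/enorm0 ->|hu] := eqVneq (enorm u) 0.
  by rewrite /dot mul0mx mxE mulr_ge0 ?enorm_ge0.
have [/enorm0 ->|hv] := eqVneq (enorm v) 0.
  by rewrite /dot trmx0 mulmx0 mxE mulr_ge0 ?enorm_ge0.
set a := enorm u; set b := enorm v.
have ha : 0 < a by rewrite lt0r hu enorm_ge0.
have hb : 0 < b by rewrite lt0r hv enorm_ge0.
have key : 0 <= dot (b *: u - a *: v) (b *: u - a *: v).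
  rewrite dotE; apply: sumr_ge0 => j _; rewrite -expr2; exact: sqr_ge0.
have eu : dot u u = a ^+ 2 by rewrite enorm_sq.
have ev : dot v v = b ^+ 2 by rewrite enorm_sq.
have sym : dot v u = dot u v.
  by rewrite !dotE; apply: eq_bigr => j _; rewrite mulrC.
move: key; rewrite !dotBl !dotBr !dotZl !dotZr eu ev sym => key.
have : 2 * (a * b) * dot u v <= 2 * (a * b) * (a * b).
  have -> : 2 * (a * b) * (a * b) = b * (b * a ^+ 2) + a * (a * b ^+ 2) by ring.
  lra.
rewrite ler_pM2l //; by rewrite mulr_gt0 // mulr_gt0.
Qed.

Lemma CSlo u v : - (enorm u * enorm v) <= dot u v.
Proof.
have := CS (- u) v; rewrite enormN.
have -> : dot (- u) v = - dot u v by rewrite /dot mulNmx mxE.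
by rewrite lerNl.
Qed.

End H.

Theorem lemma5p3 (R : realType) (n d : nat) (eta : R) (s : 'I_n -> 'rV[R]_d)
  (A : 'M[R]_(n, d)) :
  0 <= eta -> eta <= 1 / 8 ->
  (forall i : 'I_n, on_sphere (s i)) ->
  eta_dense s eta ->
  (forall i : 'I_n, enorm (row i A - s i) <= eta) ->
  forall b : 'cV[R]_n, (forall i : 'I_n, 1 - eta <= b i 0 <= 1 + eta) ->
  (forall x : 'rV[R]_d, in_scaled_ball (1 - 2 * eta) x -> in_polyhedron A b x) /\
  (forall x : 'rV[R]_d, in_polyhedron A b x -> in_scaled_ball (1 + 4 * eta) x).
Proof.
move=> he0 he8 hs hd hA b hb.
have rowE : forall i (x : 'rV[R]_d), (A *m x^T) i 0 = dot (row i A) x.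
  by move=> i x; rewrite /dot -row_mul !mxE; apply: eq_bigr => j _; rewrite !mxE.
split.
- move=> x [y [hy ->]] i; rewrite rowE.
  have -> : row i A = s i + (row i A - s i) by rewrite addrC subrK.
  rewrite dotDl.
  have h1 := CS (s i) ((1 - 2 * eta) *: y).
  have h2 := CS (row i A - s i) ((1 - 2 * eta) *: y).
  have hpos : 0 <= 1 - 2 * eta by lra.
  rewrite enormZ ger0_norm // in h1 h2.
  rewrite hs in h1.
  have := hA i; have := hb i => /andP [hb1 hb2] ha.
  have hy0 := enorm_ge0 y.
  have hp : 0 <= enorm (row i A - s i) by apply: enorm_ge0.
  have : enorm (row i A - s i) * ((1 - 2 * eta) * enorm y) <= eta * (1 - 2 * eta).
    apply: ler_pM => //; first by apply: mulr_ge0 => //; lra.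
    by rewrite -[X in _ <= X]mulr1; apply: ler_pM => //; lra.
  have : (1 - 2 * eta) * enorm y <= 1 - 2 * eta.
    by rewrite -[X in _ <= X]mulr1; apply: ler_pM => //; lra.
  nra.
- move=> x hx.
  have [/enorm0 ->|hx0] := eqVneq (enorm x) 0.
    exists 0; split; last by rewrite scaler0.
    by rewrite /enorm big1 ?sqrtr0 // => j _; rewrite mxE expr2 mul0r.
  set r := enorm x.
  have hr : 0 < r by rewrite lt0r hx0 enorm_ge0.
  set u := r^-1 *: x.
  have hu : enorm u = 1 by rewrite enormZ ger0_norm ?invr_ge0 ?ltW // mulVf.
  have [i hi] := hd u hu.
  have hxu : x = r *: u by rewrite /u scalerA divff ?scale1r.
  have := hx i; rewrite rowE {1}hxu dotZr.
  have -> : dot (row i A) u = dot u u - dot (u - s i) u + dot (row i A - s i) u.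
    by rewrite !dotBl; ring.
  rewrite -(enorm_sq u) hu expr1n.
  have h1 := CS (u - s i) u; have h2 := CSlo (row i A - s i) u.
  rewrite hu mulr1 in h1 h2.
  have := hA i; have := hb i => /andP [hb1 hb2] ha.
  move=> hle.
  have hr4 : r <= 1 + 4 * eta.
    rewrite leNgt; apply/negP => hlt.
    have : r * (1 - 2 * eta) <= 1 + eta by nra.
    nra.
  exists ((1 + 4 * eta)^-1 *: x); split.
    rewrite enormZ ger0_norm; last by rewrite invr_ge0; lra.
    by rewrite ler_pdivrMl ?mulr1 //; lra.
  by rewrite scalerA divff ?scale1r //; apply: lt0r_neq0; lra.
Qed.
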